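(* Let $p\geq3$ be a prime and let $1\leq r_1\leq\cdots\leq r_\beta\leq p-1$ be integers with $p\mid\sum_{j=1}^\beta r_j$. Put $H(k)=\sum_{j=1}^{\beta}\left\{\frac{kr_j}{p}\right\}$, where $\{x\}=x-[x]$ denotes the fractional part. Let $1\leq\theta\leq p-1$ be an integer such that $H(k)=1$ for all $1\leq k\leq\theta$. Then $\beta\leq p$ and $\theta\leq\left[\frac{p}{\beta-1}\right]$.
   Context: $[x]$ denotes the integral part of a rational number $x$. *)

(* Defs.v *)
From mathcomp Require Import all_boot all_order all_algebra.
Set Implicit Arguments. Unset Strict Implicit. Unset Printing Implicit Defensive.
Import Order.TTheory GRing.Theory Num.Theory.
Local Open Scope ring_scope.

Definition frac (x : rat) : rat := x - (Num.floor x)%:~R.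

Definition H (p : nat) (r : seq nat) (k : nat) : rat :=
  \sum_(x <- r) frac ((k * x)%:R / p%:R).

(* Main.v *)
Require Import Defs.
From mathcomp Require Import all_boot all_order all_algebra.
From mathcomp Require Import zify ring lra.
Import Order.TTheory GRing.Theory Num.Theory.
Local Open Scope ring_scope.

Lemma frac_nat (n p : nat) : (0 < p)%N ->
  Defs.frac (n%:R / p%:R) = (n %% p)%:R / p%:R :> rat.
Proof.
move=> p0.
have pn0 : (p%:R : rat) != 0 by rewrite pnatr_eq0 -lt0n.
have e : (n%:R / p%:R : rat) = (n %/ p)%:R + (n %% p)%:R / p%:R.
  by rewrite {1}(divn_eq n p) natrD natrM mulrDl mulfK.
have y0 : (0 : rat) <= (n %% p)%:R / p%:R by apply: divr_ge0; rewrite ler0n.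
have y1 : (n %% p)%:R / p%:R < (1 : rat).
  by rewrite ltr_pdivrMr ?ltr0n // mul1r ltr_nat ltn_pmod.
have fl : Num.floor (n%:R / p%:R : rat) = (n %/ p)%:Z.
  apply: floor_def; rewrite e intrD -!pmulrn; apply/andP; split; lra.
by rewrite /Defs.frac fl e -pmulrn addrAC subrr add0r.
Qed.

Lemma H_nat p r k : (0 < p)%N ->
  H p r k = (\sum_(x <- r) ((k * x) %% p))%:R / p%:R.
Proof.
move=> p0; rewrite /H natr_sum mulr_suml; apply: eq_bigr => x _.
exact: frac_nat.
Qed.

Lemma H1_nat p r k : (0 < p)%N -> H p r k = 1 ->
  (\sum_(x <- r) ((k * x) %% p))%N = p.
Proof.
move=> p0; rewrite H_nat // => /(congr1 (fun z => z * p%:R)).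
rewrite mulfVK ?pnatr_eq0 -?lt0n // mul1r => /eqP; rewrite eqr_nat => /eqP.
by [].
Qed.


Local Close Scope ring_scope.

Lemma modM_le a b p : ((a * b) %% p <= a * (b %% p))%N.
Proof. by rewrite -modnMmr leq_mod. Qed.

Lemma main_nat (p : nat) (r : seq nat) (theta : nat) :
  prime p -> (3 <= p)%N ->
  all (fun x => (1 <= x <= p - 1)%N) r ->
  (1 <= theta <= p - 1)%N ->
  (forall k : nat, (1 <= k <= theta)%N -> \sum_(x <- r) ((k * x) %% p) = p) ->
  (size r <= p)%N /\ (theta <= p %/ (size r - 1))%N.
Proof.
move=> pp p3 /allP hr /andP[t1 tp] hS.
have p0 : 0 < p by lia.
have hsum : \sum_(x <- r) x = p.
  rewrite -(hS 1) ?t1 //; rewrite big_seq [RHS]big_seq; apply: eq_bigr => x /hr /andP[? ?].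
  by rewrite mul1n modn_small //; lia.
have hsz : size r <= p.
  rewrite -hsum -sum1_size big_seq [X in _ <= X]big_seq; apply: leq_sum => x /hr /andP[? ?]; lia.
have hb2 : 2 <= size r.
  case: r hr hsum {hS hsz} => [|a [|b t]] hr //=; first by rewrite big_nil; lia.
  rewrite big_cons big_nil addn0 => ea; have := hr a; rewrite inE eqxx => /(_ isT); lia.
split => //.
rewrite leq_divRL; last by lia.
suff : (size r - 1) <= p %/ theta.
  move=> h; apply: leq_trans (leq_trunc_div p theta); by rewrite mulnC leq_mul2r h orbT.
have [->|t2] := eqVneq theta 1; first by rewrite divn1; lia.
set q := p %/ theta; set s := p %% theta.
have epq : p = q * theta + s by rewrite /q /s -divn_eq.
have s0 : 0 < s.
  rewrite lt0n; apply/negP => /eqP s0.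
  have : theta %| p by rewrite /dvdn -/s s0.
  move/eqP: t2 => t2.
  by case/primeP: pp => _ /(_ theta) H /H /orP [/eqP|/eqP]; lia.
have sl : s < theta by rewrite /s ltn_pmod //; lia.
have hSs := hS s ltac:(apply/andP; split; lia).
have hpair : forall x, x \in r -> (q*theta*x) %% p + (s*x) %% p = p.
  move=> x /hr /andP[x1 xp].
  have b0 : 0 < (s*x) %% p.
    have : ~~ (p %| s*x) by rewrite Euclid_dvdM // !gtnNdvd //; lia.
    by rewrite /dvdn lt0n.
  have d : p %| (q*theta*x) %% p + (s*x) %% p.
    rewrite /dvdn modnDm -mulnDl -epq.
    by rewrite ?modnMl ?modnMr.
  move: d => /dvdnP [c hc].
  have l1 := ltn_pmod (q*theta*x) p0.
  have l2 := ltn_pmod (s*x) p0.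
  move: hc; set a := (q*theta*x) %% p; set b := (s*x) %% p.
  case: c => [|[|c]]; rewrite ?mul0n ?mul1n ?mulSn => hc; lia.
have e1 : \sum_(x<-r) ((q*theta*x) %% p) + p = size r * p.
  rewrite -{2}hSs -big_split /= -sum1_size big_distrl /= big_seq [RHS]big_seq.
  by apply: eq_bigr => x /hpair ->; rewrite mul1n.
have e2 : \sum_(x<-r) ((q*theta*x) %% p) <= q * p.
  rewrite -[X in _ <= q * X](hS theta) ?t1 ?leqnn // big_distrr; apply: leq_sum => x _.
  by have := modM_le q (theta*x) p; rewrite mulnA.
by rewrite -(leq_pmul2r p0) mulnBl mul1n; lia.
Qed.

Theorem lemma3p13 (p : nat) (r : seq nat) (theta : nat) :
  prime p -> (3 <= p)%N ->
  sorted leq r ->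
  all (fun x => (1 <= x <= p - 1)%N) r ->
  (p %| \sum_(x <- r) x)%N ->
  (1 <= theta <= p - 1)%N ->
  (forall k : nat, (1 <= k <= theta)%N -> H p r k = 1%R) ->
  (size r <= p)%N /\ (theta <= p %/ (size r - 1))%N.
Proof.
move=> pp p3 _ hr _ ht hH; apply: main_nat => // k hk.
apply: H1_nat; [by apply: prime_gt0 | exact: hH].
Qed.
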